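(* Consider the infinite-horizon model below and suppose $\epsilon_2\ge0$; fix all parameters other than $\epsilon_1$. (i) There exists $\bar{\epsilon}_{RPE}\in[-\infty,\infty)$ such that for every $\epsilon_1\in\mathbb{R}$, the infinite-horizon model admits an infinite-horizon RPE if and only if $\epsilon_1\ge\bar{\epsilon}_{RPE}$, and the Euler-equation model (same $\beta,\sigma,\lambda,\mu,\psi,p,q,\epsilon_2$) admits an Euler-equation RPE if and only if $\epsilon_1\ge\bar{\epsilon}_{RPE}$; moreover $\bar{\epsilon}_{RPE}=-\infty$ if $q=1$. (ii) Let $\bar{\epsilon}_{REE}\in[-\infty,\infty)$ be the number such that the Euler-equation model admits a rational expectations equilibrium (REE) if and only if $\epsilon_1\ge\bar{\epsilon}_{REE}$. Then $\bar{\epsilon}_{REE}\ge\bar{\epsilon}_{RPE}$ if and only if $p+q\ge1$.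
   Context: Parameters: $0<\beta<1$, $\xi\in(0,1)$, $\lambda:=(1-\xi\beta)(1-\xi)/\xi$, $\sigma,\mu>0$, $\psi>1$, $p,q\in(0,1]$ with $(p,q)\neq(1,1)$. The shock $\epsilon_t$ is a two-state Markov chain on $\{\epsilon_1,\epsilon_2\}$ with $\Pr(\epsilon_{t+1}=\epsilon_1\mid\epsilon_t=\epsilon_1)=p$, $\Pr(\epsilon_{t+1}=\epsilon_2\mid\epsilon_t=\epsilon_2)=q$; $\bar q:=(1-p)/(2-p-q)$. Infinite-horizon model: $x_t=-\sigma i_t+\hat E_t\sum_{T\ge t}\beta^{T-t}\big((1-\beta)x_{T+1}+\sigma\pi_{T+1}-\sigma\beta i_{T+1}+\epsilon_T\big)$, $\pi_t=\lambda x_t+\hat E_t\sum_{T\ge t}(\xi\beta)^{T-t}\big(\xi\beta\lambda x_{T+1}+(1-\xi)\beta\pi_{T+1}\big)$, $i_t=\max\{\psi\pi_t,-\mu\}$. An infinite-horizon RPE is a state-contingent vector $(x_j,\pi_j,i_j)$, $j=1,2$, such that the three equations hold in each state $j$ when $\epsilon_t=\epsilon_j$ is observed and agents set $\hat E_t z_T=E(z):=\bar q z_2+(1-\bar q)z_1$ for all $T>t$ and $z\in\{x,\pi,i,\epsilon\}$. Euler-equation model: $x_t=\hat E_t x_{t+1}-\sigma(i_t-\hat E_t\pi_{t+1})+\epsilon_t$, $\pi_t=\lambda x_t+\beta\hat E_t\pi_{t+1}$, $i_t=\max\{\psi\pi_t,-\mu\}$. For $Y_j=(x_j,\pi_j)$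 and forecasts $Y^e_j=(x^e_j,\pi^e_j)$, $j=1,2$, $(Y_1,Y_2)$ solves the Euler model given the forecasts if $x_j=x^e_j-\sigma(\max\{\psi\pi_j,-\mu\}-\pi^e_j)+\epsilon_j$, $\pi_j=\lambda x_j+\beta\pi^e_j$ for $j=1,2$. An Euler-equation RPE uses $Y^e_1=Y^e_2=\bar qY_2+(1-\bar q)Y_1$; an REE uses $Y^e_1=pY_1+(1-p)Y_2$, $Y^e_2=(1-q)Y_1+qY_2$. *)

(* Defs.v *)
From Stdlib Require Import Reals.
From Coquelicot Require Import Coquelicot.
Open Scope R_scope.

Definition lam (beta xi : R) : R := (1 - xi * beta) * (1 - xi) / xi.

Definition qbar (p q : R) : R := (1 - p) / (2 - p - q).

Definition Ebar (p q z1 z2 : R) : R := qbar p q * z2 + (1 - qbar p q) * z1.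

(* The three equations of the infinite-horizon model in one state, in which the
   observed shock is ej, and agents forecast every future (T > t) value of
   x, pi, i, eps by Ex, Epi, Ei, Eeps.  The infinite sums are Coquelicot series
   over k = T - t >= 0; the term k = 0 contains the observed shock eps_t = ej. *)
Definition IH_state (beta xi sigma mu psi : R)
    (ej x pi i Ex Epi Ei Eeps : R) : Prop :=
  x = - sigma * i
      + Series (fun k => beta ^ k *
          ((1 - beta) * Ex + sigma * Epi - sigma * beta * Ei
           + match k with O => ej | S _ => Eeps end))
  /\ pi = lam beta xi * x
      + Series (fun k => (xi * beta) ^ k *
          (xi * beta * lam beta xi * Ex + (1 - xi) * beta * Epi))
  /\ i = Rmax (psi * pi) (- mu).

Definition IH_RPE_exists (beta xi sigma mu psi p q e1 e2 : R) : Prop :=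
  exists x1 pi1 i1 x2 pi2 i2 : R,
    let Ex := Ebar p q x1 x2 in
    let Epi := Ebar p q pi1 pi2 in
    let Ei := Ebar p q i1 i2 in
    let Eeps := Ebar p q e1 e2 in
    IH_state beta xi sigma mu psi e1 x1 pi1 i1 Ex Epi Ei Eeps /\
    IH_state beta xi sigma mu psi e2 x2 pi2 i2 Ex Epi Ei Eeps.

Definition Euler_solves (beta xi sigma mu psi e1 e2 : R)
    (x1 pi1 x2 pi2 xe1 pie1 xe2 pie2 : R) : Prop :=
  x1 = xe1 - sigma * (Rmax (psi * pi1) (- mu) - pie1) + e1 /\
  pi1 = lam beta xi * x1 + beta * pie1 /\
  x2 = xe2 - sigma * (Rmax (psi * pi2) (- mu) - pie2) + e2 /\
  pi2 = lam beta xi * x2 + beta * pie2.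

Definition Euler_RPE_exists (beta xi sigma mu psi p q e1 e2 : R) : Prop :=
  exists x1 pi1 x2 pi2 : R,
    Euler_solves beta xi sigma mu psi e1 e2 x1 pi1 x2 pi2
      (Ebar p q x1 x2) (Ebar p q pi1 pi2) (Ebar p q x1 x2) (Ebar p q pi1 pi2).

Definition Euler_REE_exists (beta xi sigma mu psi p q e1 e2 : R) : Prop :=
  exists x1 pi1 x2 pi2 : R,
    Euler_solves beta xi sigma mu psi e1 e2 x1 pi1 x2 pi2
      (p * x1 + (1 - p) * x2) (p * pi1 + (1 - p) * pi2)
      ((1 - q) * x1 + q * x2) ((1 - q) * pi1 + q * pi2).

(* Main.v *)
Require Import Defs.
From Stdlib Require Import Reals Lra Lia Psatz.
From Coquelicot Require Import Coquelicot.
Open Scope R_scope.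

Lemma series_shock (r C a b : R) : 0 < r < 1 ->
  Series (fun k => r ^ k * (C + match k with O => a | S _ => b end))
  = C + a + r * (C + b) / (1 - r).
Proof.
  intros hr. apply is_series_unique. apply is_series_decr_1.
  assert (Hg : Rabs r < 1) by (rewrite Rabs_right; lra).
  pose proof (is_series_scal_r (r * (C + b)) _ _ (is_series_geom r Hg)) as H.
  match goal with |- is_series _ ?L => replace L with (/ (1 - r) * (r * (C + b))) end.
  - eapply is_series_ext; [| exact H]. intro n. simpl. ring.
  - unfold plus, opp; simpl. field. lra.
Qed.

Lemma series_geomc (r D : R) : 0 < r < 1 ->
  Series (fun k => r ^ k * D) = D / (1 - r).
Proof.
  intros hr. apply is_series_unique.
  assert (Hg : Rabs r < 1) by (rewrite Rabs_right; lra).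
  replace (D / (1 - r)) with (/ (1 - r) * D) by (field; lra).
  exact (is_series_scal_r D _ _ (is_series_geom r Hg)).
Qed.


Lemma lam_pos beta xi : 0 < beta < 1 -> 0 < xi < 1 -> 0 < lam beta xi.
Proof.
  intros hb hx. unfold lam. apply Rdiv_lt_0_compat; [|lra].
  apply Rmult_lt_0_compat; nra.
Qed.

Lemma IH_state_iff beta xi sigma mu psi ej x pi i Ex Epi Ei Eeps :
  0 < beta < 1 -> 0 < xi < 1 ->
  IH_state beta xi sigma mu psi ej x pi i Ex Epi Ei Eeps <->
  (x = - sigma * i + (((1 - beta) * Ex + sigma * Epi - sigma * beta * Ei) + ej
        + beta * (((1 - beta) * Ex + sigma * Epi - sigma * beta * Ei) + Eeps) / (1 - beta))
   /\ pi = lam beta xi * x + (xi * beta * lam beta xi * Ex + (1 - xi) * beta * Epi) / (1 - xi * beta)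
   /\ i = Rmax (psi * pi) (- mu)).
Proof.
  intros hb hx. unfold IH_state.
  rewrite series_shock by lra.
  rewrite series_geomc by nra.
  tauto.
Qed.

Lemma avg2 (w x1 x2 a1 a2 : R) : x1 = a1 -> x2 = a2 -> w * x2 + (1 - w) * x1 = w * a2 + (1 - w) * a1.
Proof. intros; subst; ring. Qed.

Lemma IH_Euler beta xi sigma mu psi p q e1 e2 :
  0 < beta < 1 -> 0 < xi < 1 ->
  IH_RPE_exists beta xi sigma mu psi p q e1 e2 <-> Euler_RPE_exists beta xi sigma mu psi p q e1 e2.
Proof.
  intros hb hx.
  assert (hxb : xi * beta < 1) by nra.
  assert (hl := lam_pos beta xi hb hx).
  unfold IH_RPE_exists, Euler_RPE_exists, Euler_solves, Ebar.
  split.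
  - intros [x1 [pi1 [i1 [x2 [pi2 [i2 H]]]]]]. cbv zeta in H.
    destruct H as [H1 H2].
    rewrite IH_state_iff in H1, H2 by lra.
    destruct H1 as [Hx1 [Hp1 Hi1]]. destruct H2 as [Hx2 [Hp2 Hi2]].
    exists x1, pi1, x2, pi2. rewrite <- Hi1, <- Hi2.
    set (w := qbar p q) in *. set (l := lam beta xi) in *.
    set (C := (1 - beta) * (w * x2 + (1 - w) * x1) + sigma * (w * pi2 + (1 - w) * pi1) -
          sigma * beta * (w * i2 + (1 - w) * i1)) in *.
    set (EE := w * e2 + (1 - w) * e1) in *.
    assert (HS : beta * (C + EE) / (1 - beta) * (1 - beta) = beta * (C + EE)) by (field; lra).
    set (S := beta * (C + EE) / (1 - beta)) in *.
    set (D := xi * beta * l * (w * x2 + (1 - w) * x1) + (1 - xi) * beta * (w * pi2 + (1 - w) * pi1)) in *.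
    assert (HT : D / (1 - xi * beta) * (1 - xi * beta) = D) by (field; lra).
    set (T := D / (1 - xi * beta)) in *.
    pose proof (avg2 w _ _ _ _ Hx1 Hx2) as Ax.
    pose proof (avg2 w _ _ _ _ Hp1 Hp2) as Ap.
    assert (HS' : S = (w * x2 + (1 - w) * x1) + sigma * (w * i2 + (1 - w) * i1) - C - EE).
    { unfold EE. lra. }
    rewrite HS' in HS.
    assert (Hfish : sigma * (w * i2 + (1 - w) * i1) = sigma * (w * pi2 + (1 - w) * pi1) + EE).
    { unfold C in HS. lra. }
    assert (HT' : T = (w * pi2 + (1 - w) * pi1) - l * (w * x2 + (1 - w) * x1)) by lra.
    rewrite HT' in HT. unfold D in HT.
    assert (HT2 : T = beta * (w * pi2 + (1 - w) * pi1)).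
    { rewrite HT'. lra. }
    split; [|split; [|split]].
    + rewrite Hx1 at 1. unfold C. lra.
    + lra.
    + rewrite Hx2 at 1. unfold C. unfold EE in Hfish. lra.
    + lra.
  - intros [x1 [pi1 [x2 [pi2 [Hx1 [Hp1 [Hx2 Hp2]]]]]]].
    exists x1, pi1, (Rmax (psi * pi1) (- mu)), x2, pi2, (Rmax (psi * pi2) (- mu)).
    cbv zeta. unfold Ebar.
    set (w := qbar p q) in *. set (l := lam beta xi) in *.
    set (i1 := Rmax (psi * pi1) (- mu)) in *. set (i2 := Rmax (psi * pi2) (- mu)) in *.
    pose proof (avg2 w _ _ _ _ Hx1 Hx2) as Ax.
    pose proof (avg2 w _ _ _ _ Hp1 Hp2) as Ap.
    set (Ex := w * x2 + (1 - w) * x1) in *.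
    set (Epi := w * pi2 + (1 - w) * pi1) in *.
    set (Ei := w * i2 + (1 - w) * i1) in *.
    set (EE := w * e2 + (1 - w) * e1) in *.
    assert (Hfish : sigma * Ei = sigma * Epi + EE).
    { unfold Ei, Epi, EE. unfold Ex, Epi in Ax. lra. }
    assert (HlE : l * Ex = (1 - beta) * Epi) by (unfold Ex; lra).
    set (C := (1 - beta) * Ex + sigma * Epi - sigma * beta * Ei).
    assert (HCE : C + EE = (1 - beta) * (Ex + sigma * Ei)) by (unfold C; lra).
    assert (HS : beta * (C + EE) / (1 - beta) = beta * (Ex + sigma * Ei)).
    { rewrite HCE. field. lra. }
    assert (HD : (xi * beta * l * Ex + (1 - xi) * beta * Epi) / (1 - xi * beta) = beta * Epi).
    { replace (xi * beta * l * Ex) with (xi * beta * (l * Ex)) by ring. rewrite HlE. field. lra. }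
    split; rewrite IH_state_iff by lra; fold l Epi Ei EE C; rewrite HS, HD.
    + split; [|split; [lra|reflexivity]]. unfold C. lra.
    + split; [|split; [lra|reflexivity]]. unfold C. lra.
Qed.


Section Core.
Variables (l sig mu psi w f2 : R).
Hypotheses (hl : 0 < l) (hsig : 0 < sig) (hmu : 0 < mu) (hpsi : 1 < psi)
  (hw0 : 0 <= w) (hw1 : w <= 1) (hf2 : 0 <= f2).

Definition c := l * sig.
Definition k := c * psi.
Definition ps := - mu / psi.
Definition ys := (1 + k) * ps.
Definition jf x := Rmax (psi * x) (- mu) - x.
Definition gc x := x + c * Rmax (psi * x) (- mu).
Definition mf y := Rmin (y / (1 + k)) (y + c * mu).

Lemma c_pos : 0 < c. Proof. unfold c; nra. Qed.
Lemma k_gt_c : c < k. Proof. unfold k; pose proof c_pos; nra. Qed.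
Lemma mu_ps : mu = - (psi * ps). Proof. unfold ps; field; lra. Qed.
Lemma ps_neg : ps < 0. Proof. pose proof mu_ps; nra. Qed.
Lemma ys_eq : ys = ps - c * mu. Proof. unfold ys, k; rewrite mu_ps; ring. Qed.

Lemma mf_low y : y <= ys -> mf y = y + c * mu.
Proof.
  intro H. unfold mf. apply Rmin_right.
  pose proof c_pos as Hc. pose proof k_gt_c as Hk. rewrite ys_eq in H.
  apply (Rmult_le_reg_r (1 + k)); [lra|]. unfold Rdiv. rewrite Rmult_assoc, Rinv_l by lra.
  rewrite mu_ps in *. unfold k in *. nra.
Qed.

Lemma mf_high y : ys <= y -> mf y = y / (1 + k).
Proof.
  intro H. unfold mf. apply Rmin_left.
  pose proof c_pos as Hc. pose proof k_gt_c as Hk. rewrite ys_eq in H.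
  apply (Rmult_le_reg_r (1 + k)); [lra|]. unfold Rdiv. rewrite Rmult_assoc, Rinv_l by lra.
  rewrite mu_ps in *. unfold k in *. nra.
Qed.

Lemma gc_mf y : gc (mf y) = y.
Proof.
  pose proof c_pos as Hc. pose proof k_gt_c as Hk. pose proof ps_neg as Hps.
  destruct (Rle_dec ys y) as [H|H].
  - rewrite mf_high by lra. unfold gc. rewrite Rmax_left.
    + unfold k. field. unfold k in *. lra.
    + rewrite ys_eq in H. rewrite mu_ps in *.
      assert (y / (1 + k) >= ps).
      { apply Rle_ge. apply (Rmult_le_reg_r (1 + k)); [lra|]. unfold Rdiv. rewrite Rmult_assoc, Rinv_l by lra.
        unfold k in *. nra. }
      nra.
  - rewrite mf_low by lra. unfold gc. rewrite Rmax_right.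
    + ring.
    + rewrite ys_eq in H. rewrite mu_ps in *. nra.
Qed.

Lemma mf_gc x : mf (gc x) = x.
Proof.
  pose proof c_pos as Hc. pose proof k_gt_c as Hk. pose proof ps_neg as Hps.
  destruct (Rle_dec (- mu) (psi * x)) as [H|H].
  - unfold gc. rewrite Rmax_left by lra. rewrite mf_high.
    + unfold k. field. unfold k in *. lra.
    + unfold ys, k. rewrite mu_ps in H. assert (ps <= x) by nra. assert (c * (psi * ps) <= c * (psi * x)) by (apply Rmult_le_compat_l; lra). nra.
  - unfold gc. rewrite Rmax_right by lra. rewrite mf_low.
    + ring.
    + rewrite ys_eq. rewrite mu_ps in *. nra.
Qed.

Lemma mf_mono y y' : y <= y' -> mf y <= mf y'.
Proof.
  intro H. unfold mf. pose proof k_gt_c as Hk. pose proof c_pos as Hc.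
  apply Rmin_glb.
  - eapply Rle_trans; [apply Rmin_l|]. unfold Rdiv. apply Rmult_le_compat_r; [|lra].
    left; apply Rinv_0_lt_compat; lra.
  - eapply Rle_trans; [apply Rmin_r|]. lra.
Qed.

Lemma mf_le y : mf y <= y / (1 + k).
Proof. apply Rmin_l. Qed.


Lemma Rmin_abs a b : Rmin a b = (a + b - Rabs (a - b)) / 2.
Proof.
  unfold Rmin. destruct (Rle_dec a b).
  - rewrite Rabs_left1 by lra. field.
  - rewrite Rabs_right by lra. field.
Qed.

Lemma mf_cont : continuity mf.
Proof.
  intro x.
  apply continuity_pt_locally_ext with
    (f := fun y => (y / (1 + k) + (y + c * mu) - Rabs (y / (1 + k) - (y + c * mu))) / 2) (a := 1).
  - lra.
  - intros y _. unfold mf. rewrite Rmin_abs. reflexivity.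
  - unfold Rdiv at 3.
    apply continuity_pt_mult; [|apply continuity_pt_const; intros ? ?; reflexivity].
    apply continuity_pt_minus.
    + apply derivable_continuous_pt. reg.
    + apply (continuity_pt_comp (fun y => y / (1 + k) - (y + c * mu)) Rabs).
      * apply derivable_continuous_pt. reg.
      * apply Rcontinuity_abs.
Qed.

Definition G e1 e2 b := w * mf ((1 + c) * b + l * e2) + (1 - w) * mf ((1 + c) * b + l * e1) - b.

Lemma G_cont e1 e2 : continuity (fun b => - G e1 e2 b).
Proof.
  intro x. unfold G.
  apply continuity_pt_opp. apply continuity_pt_minus; [|apply derivable_continuous_pt; reg].
  apply continuity_pt_plus; apply continuity_pt_mult; try (apply continuity_pt_const; intros ? ?; reflexivity).
  - apply (continuity_pt_comp (fun b => (1 + c) * b + l * e2) mf).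
    + apply derivable_continuous_pt. reg.
    + apply mf_cont.
  - apply (continuity_pt_comp (fun b => (1 + c) * b + l * e1) mf).
    + apply derivable_continuous_pt. reg.
    + apply mf_cont.
Qed.

Lemma G_mono e1 e2 e1' e2' b : e1 <= e1' -> e2 <= e2' -> G e1 e2 b <= G e1' e2' b.
Proof.
  intros H1 H2. unfold G.
  assert (mf ((1 + c) * b + l * e2) <= mf ((1 + c) * b + l * e2')) by (apply mf_mono; nra).
  assert (mf ((1 + c) * b + l * e1) <= mf ((1 + c) * b + l * e1')) by (apply mf_mono; nra).
  assert (w * mf ((1 + c) * b + l * e2) <= w * mf ((1 + c) * b + l * e2')) by (apply Rmult_le_compat_l; lra).
  assert ((1 - w) * mf ((1 + c) * b + l * e1) <= (1 - w) * mf ((1 + c) * b + l * e1')) by (apply Rmult_le_compat_l; lra).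
  lra.
Qed.

Lemma G_upper e1 e2 b : G e1 e2 b <= ((1 + c) * b + l * (w * e2 + (1 - w) * e1)) / (1 + k) - b.
Proof.
  unfold G. pose proof k_gt_c as Hk. pose proof c_pos as Hc.
  assert (w * mf ((1 + c) * b + l * e2) <= w * (((1 + c) * b + l * e2) / (1 + k))) by (apply Rmult_le_compat_l; [lra| apply mf_le]).
  assert ((1 - w) * mf ((1 + c) * b + l * e1) <= (1 - w) * (((1 + c) * b + l * e1) / (1 + k))) by (apply Rmult_le_compat_l; [lra| apply mf_le]).
  assert (E : w * (((1 + c) * b + l * e2) / (1 + k)) + (1 - w) * (((1 + c) * b + l * e1) / (1 + k))
     = ((1 + c) * b + l * (w * e2 + (1 - w) * e1)) / (1 + k)) by (field; lra).
  lra.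
Qed.

Lemma G_root e1 e2 : (exists b, 0 <= G e1 e2 b) -> exists b, G e1 e2 b = 0.
Proof.
  intros [b0 Hb0]. destruct (Req_dec (G e1 e2 b0) 0) as [E|E]; [exists b0; exact E|].
  pose proof k_gt_c as Hk. pose proof c_pos as Hc.
  set (L := l * (w * e2 + (1 - w) * e1)).
  set (B := Rabs b0 + 1 + Rabs L / (k - c)).
  assert (HB0 : b0 < B).
  { unfold B. assert (0 <= Rabs L / (k - c)) by (unfold Rdiv; apply Rmult_le_pos; [apply Rabs_pos|left; apply Rinv_0_lt_compat; lra]).
    pose proof (Rle_abs b0). lra. }
  assert (HBL : L < (k - c) * B).
  { unfold B. replace ((k - c) * (Rabs b0 + 1 + Rabs L / (k - c))) with ((k - c) * (Rabs b0 + 1) + Rabs L) by (field; lra).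
    pose proof (Rle_abs L). pose proof (Rabs_pos b0). nra. }
  assert (HGB : G e1 e2 B < 0).
  { eapply Rle_lt_trans; [apply G_upper|]. fold L.
    replace (((1 + c) * B + L) / (1 + k) - B) with ((L - (k - c) * B) / (1 + k)) by (field; lra).
    apply Rdiv_neg_pos; lra. }
  destruct (IVT (fun b => - G e1 e2 b) b0 B (G_cont e1 e2) HB0) as [z [_ Hz]]; [lra|lra|].
  exists z. lra.
Qed.

Definition UVR e1 e2 := exists u v,
  l * e1 = c * jf u - w * (1 + c) * (v - u) /\ l * e2 = c * jf v + (1 - w) * (1 + c) * (v - u).

Lemma UVR_G e1 e2 : UVR e1 e2 -> exists b, G e1 e2 b = 0.
Proof.
  intros [u [v [H1 H2]]]. exists ((1 - w) * u + w * v). unfold G.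
  assert (E1 : (1 + c) * ((1 - w) * u + w * v) + l * e1 = gc u) by (rewrite H1; unfold gc, jf; ring).
  assert (E2 : (1 + c) * ((1 - w) * u + w * v) + l * e2 = gc v) by (rewrite H2; unfold gc, jf; ring).
  rewrite E1, E2, !mf_gc. ring.
Qed.

Lemma G_UVR e1 e2 b : G e1 e2 b = 0 -> UVR e1 e2.
Proof.
  intros H. unfold G in H.
  set (u := mf ((1 + c) * b + l * e1)) in *.
  set (v := mf ((1 + c) * b + l * e2)) in *.
  exists u, v.
  assert (E1 : gc u = (1 + c) * b + l * e1) by apply gc_mf.
  assert (E2 : gc v = (1 + c) * b + l * e2) by apply gc_mf.
  clearbody u v. unfold gc in E1, E2. unfold jf.
  assert (Hb : b = w * v + (1 - w) * u) by lra.
  subst b. split; lra.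
Qed.


Definition Lz e1 e2 b := c * b + l * (w * e2 + (1 - w) * e1) + c * mu.
Definition Lu e1 e2 b := ((1 + c) * b + l * (w * e2 + (1 - w) * e1)) / (1 + k) - b.
Definition Lm e1 e2 b := w * (((1 + c) * b + l * e2) / (1 + k)) + (1 - w) * ((1 + c) * b + l * e1 + c * mu) - b.

Lemma ps_ys : ys / (1 + k) = ps.
Proof. unfold ys. pose proof k_gt_c. pose proof c_pos. field. lra. Qed.

Lemma G_low e1 e2 b : (1 + c) * b + l * e2 <= ys -> (1 + c) * b + l * e1 <= ys -> G e1 e2 b = Lz e1 e2 b.
Proof. intros H1 H2. unfold G, Lz. rewrite !mf_low by lra. ring. Qed.

Lemma G_high e1 e2 b : ys <= (1 + c) * b + l * e2 -> ys <= (1 + c) * b + l * e1 -> G e1 e2 b = Lu e1 e2 b.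
Proof. intros H1 H2. unfold G, Lu. rewrite !mf_high by lra. pose proof k_gt_c. pose proof c_pos. field. lra. Qed.

Lemma G_mid e1 e2 b : ys <= (1 + c) * b + l * e2 -> (1 + c) * b + l * e1 <= ys -> G e1 e2 b = Lm e1 e2 b.
Proof. intros H1 H2. unfold G, Lm. rewrite mf_high by lra. rewrite mf_low by lra. ring. Qed.


Definition k1 := (ys - l * f2) / (1 + c).
Definition k2 e1 := (ys - l * e1) / (1 + c).
Definition t1 := - (c * k1 + l * w * f2 + c * mu) / ((1 - w) * l).
Definition a2 := l * (1 / (1 + c) - w / (1 + k)).
Definition t2 := - ((ys + l * w * f2) / (1 + k) - ys / (1 + c)) / a2.


Lemma a2_pos : 0 < a2.
Proof.
  unfold a2. pose proof c_pos. pose proof k_gt_c. apply Rmult_lt_0_compat; [lra|].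
  assert (w / (1 + k) < 1 / (1 + c)); [|lra].
  apply (Rmult_lt_reg_r ((1 + k) * (1 + c))); [nra|].
  replace (w / (1 + k) * ((1 + k) * (1 + c))) with (w * (1 + c)) by (field; lra).
  replace (1 / (1 + c) * ((1 + k) * (1 + c))) with (1 + k) by (field; lra).
  nra.
Qed.

Lemma F1 e1 (hw : w < 1) : Lz e1 f2 k1 = (1 - w) * l * (e1 - t1).
Proof. unfold Lz, t1, k1.  pose proof c_pos. field. repeat split; intro; lra. Qed.

Lemma F2 e1 : Lu e1 f2 (k2 e1) = a2 * (e1 - t2).
Proof.
  pose proof a2_pos. unfold Lu, t2, k2.  pose proof c_pos. pose proof k_gt_c.
  assert (a2 <> 0) by lra. unfold a2 in *. field. repeat split; intro; nra.
Qed.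

Lemma ps_mu : ps + mu > 0.
Proof. pose proof mu_ps. assert (psi * ps < ps) by (pose proof ps_neg; nra). lra. Qed.

Lemma t1_lt (hw : w < 1) : t1 < f2.
Proof.
  pose proof (F1 f2 hw) as E. pose proof c_pos. pose proof ps_mu.
  assert (P : Lz f2 f2 k1 * (1 + c) = c * (ps + mu) + l * f2).
  { unfold Lz, k1. rewrite ys_eq. field. lra. }
  assert (0 < Lz f2 f2 k1).
  { apply (Rmult_lt_reg_r (1 + c)); [lra|]. rewrite P. nra. }
  assert (0 < (1 - w) * l) by nra.
  nra.
Qed.

Lemma Lm_k1 e1 : Lm e1 f2 k1 = Lz e1 f2 k1.
Proof.
  pose proof c_pos. pose proof k_gt_c.
  assert (A : (1 + c) * k1 + l * f2 = ys) by (unfold k1; field; lra).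
  assert (Lm e1 f2 k1 - Lz e1 f2 k1 = w * (((1 + c) * k1 + l * f2) / (1 + k) - ((1 + c) * k1 + l * f2) - c * mu)).
  { unfold Lm, Lz. field. lra. }
  rewrite A, ps_ys, ys_eq in H1. lra.
Qed.

Lemma Lm_k2 e1 : Lm e1 f2 (k2 e1) = Lu e1 f2 (k2 e1).
Proof.
  pose proof c_pos. pose proof k_gt_c.
  assert (A : (1 + c) * k2 e1 + l * e1 = ys) by (unfold k2; field; lra).
  assert (Lm e1 f2 (k2 e1) - Lu e1 f2 (k2 e1) = (1 - w) * (((1 + c) * k2 e1 + l * e1) + c * mu - ((1 + c) * k2 e1 + l * e1) / (1 + k))).
  { unfold Lm, Lu. field. lra. }
  rewrite A, ps_ys, ys_eq in H1. lra.
Qed.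

Lemma Gthr (hw : w < 1) e1 : (exists b, 0 <= G e1 f2 b) <-> (t1 <= e1 \/ t2 <= e1).
Proof.
  pose proof c_pos as Hc. pose proof k_gt_c as Hk. pose proof (t1_lt hw) as Ht1. pose proof a2_pos as Ha2.
  assert (Hwl : 0 < (1 - w) * l) by nra.
  split.
  - intros [b Hb].
    destruct (Rle_dec t1 e1) as [?|N1]; [left; assumption|].
    destruct (Rle_dec t2 e1) as [?|N2]; [right; assumption|].
    exfalso. assert (He : e1 < f2) by lra.
    assert (Hle : l * e1 < l * f2) by nra.
    pose proof (F1 e1 hw) as E1. pose proof (F2 e1) as E2.
    assert (Z1 : Lz e1 f2 k1 < 0) by (rewrite E1; nra).
    assert (Z2 : Lu e1 f2 (k2 e1) < 0) by (rewrite E2; nra).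
    destruct (Rle_dec ((1 + c) * b + l * f2) ys) as [A|A].
    + rewrite G_low in Hb by lra.
      assert (b <= k1).
      { unfold k1. apply (Rmult_le_reg_r (1 + c)); [lra|]. unfold Rdiv. rewrite Rmult_assoc, Rinv_l by lra. lra. }
      assert (Lz e1 f2 b - Lz e1 f2 k1 = c * (b - k1)) by (unfold Lz; ring).
      nra.
    + destruct (Rle_dec ys ((1 + c) * b + l * e1)) as [B|B].
      * rewrite G_high in Hb by lra.
        assert (k2 e1 <= b).
        { unfold k2. apply (Rmult_le_reg_r (1 + c)); [lra|]. unfold Rdiv. rewrite Rmult_assoc, Rinv_l by lra. lra. }
        assert (Lu e1 f2 b - Lu e1 f2 (k2 e1) = (c - k) / (1 + k) * (b - k2 e1)) by (unfold Lu; field; lra).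
        assert ((c - k) / (1 + k) < 0) by (apply Rdiv_neg_pos; lra).
        nra.
      * rewrite G_mid in Hb by lra.
        assert (k1 <= b).
        { unfold k1. apply (Rmult_le_reg_r (1 + c)); [lra|]. unfold Rdiv. rewrite Rmult_assoc, Rinv_l by lra. lra. }
        assert (b <= k2 e1).
        { unfold k2. apply (Rmult_le_reg_r (1 + c)); [lra|]. unfold Rdiv. rewrite Rmult_assoc, Rinv_l by lra. lra. }
        set (sl := w * (1 + c) / (1 + k) + (1 - w) * (1 + c) - 1).
        assert (S1 : Lm e1 f2 b - Lm e1 f2 k1 = sl * (b - k1)) by (unfold Lm, sl; field; lra).
        assert (S2 : Lm e1 f2 b - Lm e1 f2 (k2 e1) = sl * (b - k2 e1)) by (unfold Lm, sl; field; lra).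
        rewrite Lm_k1 in S1. rewrite Lm_k2 in S2.
        destruct (Rle_dec 0 sl); nra.
  - intros H.
    assert (C1 : t1 <= e1 -> exists b, 0 <= G e1 f2 b).
    { intro H1. exists k1.
      assert (A : (1 + c) * k1 + l * f2 = ys) by (unfold k1; field; lra).
      destruct (Rle_dec e1 f2) as [L|L].
      - rewrite G_low by nra. rewrite (F1 e1 hw). nra.
      - apply Rle_trans with (G f2 f2 k1); [| apply G_mono; lra].
        rewrite G_low by nra. rewrite (F1 f2 hw). nra. }
    destruct H as [H|H]; [apply C1; exact H|].
    destruct (Rle_dec f2 e1) as [L|L]; [apply C1; lra|].
    exists (k2 e1).
    assert (A : (1 + c) * k2 e1 + l * e1 = ys) by (unfold k2; field; lra).
    rewrite G_high by nra. rewrite F2. nra.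
Qed.

Lemma jf_convex t a b : 0 <= t <= 1 -> jf (t * a + (1 - t) * b) <= t * jf a + (1 - t) * jf b.
Proof.
  intros Ht. unfold jf.
  assert (Rmax (psi * (t * a + (1 - t) * b)) (- mu) <= t * Rmax (psi * a) (- mu) + (1 - t) * Rmax (psi * b) (- mu)).
  { apply Rmax_lub.
    - pose proof (Rmax_l (psi * a) (- mu)). pose proof (Rmax_l (psi * b) (- mu)).
      assert (t * (psi * a) <= t * Rmax (psi * a) (- mu)) by (apply Rmult_le_compat_l; lra).
      assert ((1 - t) * (psi * b) <= (1 - t) * Rmax (psi * b) (- mu)) by (apply Rmult_le_compat_l; lra).
      nra.
    - pose proof (Rmax_r (psi * a) (- mu)). pose proof (Rmax_r (psi * b) (- mu)).
      assert (t * (- mu) <= t * Rmax (psi * a) (- mu)) by (apply Rmult_le_compat_l; lra).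
      assert ((1 - t) * (- mu) <= (1 - t) * Rmax (psi * b) (- mu)) by (apply Rmult_le_compat_l; lra).
      nra. }
  nra.
Qed.

Lemma UVR_mono e1 e2 e1' e2' : UVR e1 e2 -> e1 <= e1' -> e2 <= e2' -> UVR e1' e2'.
Proof.
  intros H H1 H2. destruct (UVR_G _ _ H) as [b Hb].
  destruct (G_root e1' e2') as [b' Hb'].
  - exists b. rewrite <- Hb. apply G_mono; assumption.
  - exact (G_UVR _ _ _ Hb').
Qed.

Definition UVr r e1 e2 := exists u v,
  l * e1 = c * jf u - r * w * (1 + c) * (v - u) /\ l * e2 = c * jf v + r * (1 - w) * (1 + c) * (v - u).

Lemma UVr_UVR r e1 e2 : 0 < r <= 1 -> UVr r e1 e2 -> UVR e1 e2.
Proof.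
  intros Hr [u [v [H1 H2]]]. pose proof c_pos as Hc.
  destruct (Rle_dec (jf v) (jf u)) as [J|J].
  - set (u' := r * u + (1 - r) * v).
    assert (Ju : jf u' <= jf u) by (pose proof (jf_convex r u v); unfold u'; nra).
    apply UVR_mono with ((c * jf u' - w * (1 + c) * (v - u')) / l) e2.
    + exists u', v. split; [field; lra|]. rewrite H2. unfold u'. ring.
    + apply (Rmult_le_reg_l l); [lra|].
      replace (l * ((c * jf u' - w * (1 + c) * (v - u')) / l)) with (c * jf u' - w * (1 + c) * (v - u')) by (field; lra).
      rewrite H1. unfold u'.
      assert (c * jf u' <= c * jf u) by (apply Rmult_le_compat_l; lra). unfold u' in H. nra.
    + lra.
  - set (v' := r * v + (1 - r) * u).
    assert (Jv : jf v' <= jf v) by (pose proof (jf_convex r v u); unfold v'; nra).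
    apply UVR_mono with e1 ((c * jf v' + (1 - w) * (1 + c) * (v' - u)) / l).
    + exists u, v'. split; [|field; lra]. rewrite H1. unfold v'. ring.
    + lra.
    + apply (Rmult_le_reg_l l); [lra|].
      replace (l * ((c * jf v' + (1 - w) * (1 + c) * (v' - u)) / l)) with (c * jf v' + (1 - w) * (1 + c) * (v' - u)) by (field; lra).
      rewrite H2. unfold v'.
      assert (c * jf v' <= c * jf v) by (apply Rmult_le_compat_l; lra). unfold v' in H. nra.
Qed.

Lemma jf_ps : jf ps = - mu - ps.
Proof. unfold jf. rewrite Rmax_right; [ring|]. rewrite mu_ps. lra. Qed.

Lemma witA r (hr : 1 < r) (hw : 0 < w < 1) :
  exists e1, UVr r e1 f2 /\ e1 < t1.
Proof.
  pose proof c_pos as Hc. pose proof ps_mu as Hpm. pose proof ps_neg as Hps.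
  set (N := l * f2 + c * (mu + ps)).
  assert (HN : 0 < N) by (unfold N; nra).
  set (Q := r * (1 - w) * (1 + c)).
  assert (HQ : 0 < Q) by (unfold Q; apply Rmult_lt_0_compat; [nra|lra]).
  set (sA := N / Q).
  assert (HsA : 0 < sA) by (unfold sA; apply Rdiv_lt_0_compat; lra).
  assert (Ju : jf (ps - sA) = - mu - ps + sA).
  { unfold jf. rewrite Rmax_right; [ring|]. rewrite mu_ps. nra. }
  exists ((c * (- mu - ps + sA) - r * w * (1 + c) * sA) / l). split.
  - exists (ps - sA), ps. rewrite Ju, jf_ps. split.
    + field. lra.
    + unfold sA, Q, N. field. split; [lra|]. split; [lra|]. intro; nra.
  - assert (E : l * (t1 - (c * (- mu - ps + sA) - r * w * (1 + c) * sA) / l) = c * N * (r - 1) / (r * (1 - w) * (1 + c))).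
    { unfold t1, k1, sA, Q, N. rewrite ys_eq. field. repeat split; intro; nra. }
    assert (0 < c * N * (r - 1) / (r * (1 - w) * (1 + c))).
    { apply Rdiv_lt_0_compat. apply Rmult_lt_0_compat; [nra|lra]. apply Rmult_lt_0_compat; [nra|lra]. }
    nra.
Qed.

Lemma witB r (hr : 1 < r) (hw : 0 < w < 1) :
  exists e1, UVr r e1 f2 /\ e1 < t2.
Proof.
  pose proof c_pos as Hc. pose proof k_gt_c as Hk. pose proof ps_mu as Hpm. pose proof ps_neg as Hps.
  set (D := c * (psi - 1)).
  assert (HD : 0 < D) by (unfold D; nra).
  set (M := l * f2 - D * ps).
  assert (HM : 0 < M) by (unfold M; nra).
  set (Q := r * (1 - w) * (1 + c)).
  assert (HQ : 0 < Q) by (unfold Q; apply Rmult_lt_0_compat; [nra|lra]).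
  set (vB := ps + M / (D + Q)).
  assert (HvB : ps < vB) by (unfold vB; assert (0 < M / (D + Q)) by (apply Rdiv_lt_0_compat; lra); lra).
  assert (Jv : jf vB = (psi - 1) * vB).
  { unfold jf. rewrite Rmax_left; [ring|]. rewrite mu_ps. nra. }
  exists ((c * (- mu - ps) - r * w * (1 + c) * (vB - ps)) / l). split.
  - exists ps, vB. rewrite Jv, jf_ps. split.
    + field. lra.
    + assert (HDQ : D + Q <> 0) by lra. unfold vB, Q, M, D in *. field. assumption.
  - assert (E : l * (t2 - (c * (- mu - ps) - r * w * (1 + c) * (vB - ps)) / l)
        = w * (1 + c) * M * D * (r - 1) / ((D + Q) * (D + (1 - w) * (1 + c)))).
    { pose proof a2_pos as Ha. assert (Ha2 : a2 <> 0) by lra. unfold t2, vB, Q, M, D. unfold a2 in *.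
      rewrite ys_eq. unfold k in *. rewrite mu_ps. field.
      assert (P1 : 0 < c * (psi - 1)) by nra. assert (P2 : 0 < (1 - w) * (1 + c)) by nra. assert (P3 : 0 < r * (1 - w) * (1 + c)) by (apply Rmult_lt_0_compat; nra). repeat split; intro; nra. }
    assert (0 < w * (1 + c) * M * D * (r - 1) / ((D + Q) * (D + (1 - w) * (1 + c)))).
    { apply Rdiv_lt_0_compat.
      - repeat apply Rmult_lt_0_compat; nra.
      - apply Rmult_lt_0_compat; nra. }
    nra.
Qed.

Lemma witness r (hr : 1 < r) (hw : 0 < w < 1) :
  exists e1, UVr r e1 f2 /\ e1 < Rmin t1 t2.
Proof.
  destruct (Rle_dec t1 t2) as [H|H].
  - destruct (witA r hr hw) as [e1 [H1 H2]]. exists e1. split; [assumption|].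
    rewrite Rmin_left by lra. lra.
  - destruct (witB r hr hw) as [e1 [H1 H2]]. exists e1. split; [assumption|].
    rewrite Rmin_right by lra. lra.
Qed.

End Core.



Lemma Euler_UVR beta xi sigma mu psi p q e1 e2 :
  0 < beta < 1 -> 0 < xi < 1 ->
  Euler_RPE_exists beta xi sigma mu psi p q e1 e2 <-> UVR (lam beta xi) sigma mu psi (qbar p q) e1 e2.
Proof.
  intros hb hx. pose proof (lam_pos beta xi hb hx) as hl.
  unfold Euler_RPE_exists, Euler_solves, UVR, Ebar, c, jf.
  set (w := qbar p q). set (l := lam beta xi) in *.
  split.
  - intros [x1 [pi1 [x2 [pi2 [Hx1 [Hp1 [Hx2 Hp2]]]]]]].
    exists pi1, pi2.
    assert (L1 : l * x1 = pi1 - beta * (w * pi2 + (1 - w) * pi1)) by lra.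
    assert (L2 : l * x2 = pi2 - beta * (w * pi2 + (1 - w) * pi1)) by lra.
    assert (He1 : e1 = x1 - (w * x2 + (1 - w) * x1) + sigma * (Rmax (psi * pi1) (- mu) - (w * pi2 + (1 - w) * pi1))) by lra.
    assert (He2 : e2 = x2 - (w * x2 + (1 - w) * x1) + sigma * (Rmax (psi * pi2) (- mu) - (w * pi2 + (1 - w) * pi1))) by lra.
    split.
    + rewrite He1.
      replace (l * (x1 - (w * x2 + (1 - w) * x1) + sigma * (Rmax (psi * pi1) (- mu) - (w * pi2 + (1 - w) * pi1))))
        with (w * (l * x1) - w * (l * x2) + l * sigma * (Rmax (psi * pi1) (- mu) - (w * pi2 + (1 - w) * pi1))) by ring.
      rewrite L1, L2. ring.
    + rewrite He2.
      replace (l * (x2 - (w * x2 + (1 - w) * x1) + sigma * (Rmax (psi * pi2) (- mu) - (w * pi2 + (1 - w) * pi1))))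
        with ((1 - w) * (l * x2) - (1 - w) * (l * x1) + l * sigma * (Rmax (psi * pi2) (- mu) - (w * pi2 + (1 - w) * pi1))) by ring.
      rewrite L1, L2. ring.
  - intros [u [v [H1 H2]]].
    exists ((u - beta * (w * v + (1 - w) * u)) / l), u, ((v - beta * (w * v + (1 - w) * u)) / l), v.
    assert (He1 : e1 = (l * sigma * (Rmax (psi * u) (- mu) - u) - w * (1 + l * sigma) * (v - u)) / l) by (rewrite <- H1; field; lra).
    assert (He2 : e2 = (l * sigma * (Rmax (psi * v) (- mu) - v) + (1 - w) * (1 + l * sigma) * (v - u)) / l) by (rewrite <- H2; field; lra).
    rewrite He1, He2.
    repeat split; field; lra.
Qed.

Definition Acoef beta p q l sigma := 1 - beta * (p + q - 1) + l * sigma.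

Lemma REE_UV beta xi sigma mu psi p q e1 e2 :
  0 < beta < 1 -> 0 < xi < 1 ->
  Euler_REE_exists beta xi sigma mu psi p q e1 e2 ->
  exists u v,
    lam beta xi * e1 = c (lam beta xi) sigma * jf mu psi u - (1 - p) * Acoef beta p q (lam beta xi) sigma * (v - u) /\
    lam beta xi * e2 = c (lam beta xi) sigma * jf mu psi v + (1 - q) * Acoef beta p q (lam beta xi) sigma * (v - u).
Proof.
  intros hb hx. pose proof (lam_pos beta xi hb hx) as hl.
  unfold Euler_REE_exists, Euler_solves, Acoef, c, jf.
  set (l := lam beta xi) in *.
  intros [x1 [pi1 [x2 [pi2 [Hx1 [Hp1 [Hx2 Hp2]]]]]]].
  exists pi1, pi2.
  assert (L1 : l * x1 = pi1 - beta * (p * pi1 + (1 - p) * pi2)) by lra.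
  assert (L2 : l * x2 = pi2 - beta * ((1 - q) * pi1 + q * pi2)) by lra.
  assert (He1 : e1 = x1 - (p * x1 + (1 - p) * x2) + sigma * (Rmax (psi * pi1) (- mu) - (p * pi1 + (1 - p) * pi2))) by lra.
  assert (He2 : e2 = x2 - ((1 - q) * x1 + q * x2) + sigma * (Rmax (psi * pi2) (- mu) - ((1 - q) * pi1 + q * pi2))) by lra.
  split.
  - rewrite He1.
    replace (l * (x1 - (p * x1 + (1 - p) * x2) + sigma * (Rmax (psi * pi1) (- mu) - (p * pi1 + (1 - p) * pi2))))
      with ((1 - p) * (l * x1) - (1 - p) * (l * x2) + l * sigma * (Rmax (psi * pi1) (- mu) - (p * pi1 + (1 - p) * pi2))) by ring.
    rewrite L1, L2. ring.
  - rewrite He2.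
    replace (l * (x2 - ((1 - q) * x1 + q * x2) + sigma * (Rmax (psi * pi2) (- mu) - ((1 - q) * pi1 + q * pi2))))
      with ((1 - q) * (l * x2) - (1 - q) * (l * x1) + l * sigma * (Rmax (psi * pi2) (- mu) - ((1 - q) * pi1 + q * pi2))) by ring.
    rewrite L1, L2. ring.
Qed.

Lemma UV_REE beta xi sigma mu psi p q e1 e2 u v :
  0 < beta < 1 -> 0 < xi < 1 ->
    lam beta xi * e1 = c (lam beta xi) sigma * jf mu psi u - (1 - p) * Acoef beta p q (lam beta xi) sigma * (v - u) ->
    lam beta xi * e2 = c (lam beta xi) sigma * jf mu psi v + (1 - q) * Acoef beta p q (lam beta xi) sigma * (v - u) ->
  Euler_REE_exists beta xi sigma mu psi p q e1 e2.
Proof.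
  intros hb hx. pose proof (lam_pos beta xi hb hx) as hl.
  unfold Euler_REE_exists, Euler_solves, Acoef, c, jf.
  set (l := lam beta xi) in *.
  intros H1 H2.
  exists ((u - beta * (p * u + (1 - p) * v)) / l), u, ((v - beta * ((1 - q) * u + q * v)) / l), v.
  assert (He1 : e1 = (l * sigma * (Rmax (psi * u) (- mu) - u) - (1 - p) * (1 - beta * (p + q - 1) + l * sigma) * (v - u)) / l) by (rewrite <- H1; field; lra).
  assert (He2 : e2 = (l * sigma * (Rmax (psi * v) (- mu) - v) + (1 - q) * (1 - beta * (p + q - 1) + l * sigma) * (v - u)) / l) by (rewrite <- H2; field; lra).
  rewrite He1, He2.
  repeat split; field; lra.
Qed.


Ltac feed H := repeat match type of H with ?A -> _ => let h := fresh in assert (h : A) by (assumption || lra); specialize (H h); clear h end.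

Lemma Rmin_le_iff a b x : Rmin a b <= x <-> a <= x \/ b <= x.
Proof. unfold Rmin. destruct (Rle_dec a b); split; intros H; try destruct H; lra. Qed.

Theorem proposition9 (beta xi sigma mu psi p q e2 : R)
  (hbeta : 0 < beta < 1) (hxi : 0 < xi < 1)
  (hsigma : 0 < sigma) (hmu : 0 < mu) (hpsi : 1 < psi)
  (hp : 0 < p <= 1) (hq : 0 < q <= 1) (hpq : ~ (p = 1 /\ q = 1))
  (he2 : 0 <= e2) :
  exists ebarRPE : Rbar,
    ebarRPE <> p_infty /\
    (forall e1 : R,
       IH_RPE_exists beta xi sigma mu psi p q e1 e2 <-> Rbar_le ebarRPE e1) /\
    (forall e1 : R,
       Euler_RPE_exists beta xi sigma mu psi p q e1 e2 <-> Rbar_le ebarRPE e1) /\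
    (q = 1 -> ebarRPE = m_infty) /\
    (forall ebarREE : Rbar,
       ebarREE <> p_infty ->
       (forall e1 : R,
          Euler_REE_exists beta xi sigma mu psi p q e1 e2 <-> Rbar_le ebarREE e1) ->
       (Rbar_le ebarRPE ebarREE <-> 1 <= p + q)).
Proof.
  pose proof (lam_pos beta xi hbeta hxi) as hl.
  set (l := lam beta xi) in *.
  set (w := qbar p q).
  assert (hd : 0 < 2 - p - q).
  { destruct (Rlt_dec 0 (2 - p - q)) as [H|H]; [exact H|]. exfalso. apply hpq. split; lra. }
  assert (hwe : w * (2 - p - q) = 1 - p) by (unfold w, qbar; field; lra).
  assert (hw0 : 0 <= w) by nra.
  assert (hw1 : w <= 1) by nra.
  assert (hc : 0 < c l sigma) by (unfold c; nra).
  assert (RPEq1 : q = 1 -> forall e1, Euler_RPE_exists beta xi sigma mu psi p q e1 e2).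
  { intros Hq e1. assert (hp1 : p < 1) by (destruct (Req_dec p 1); [exfalso; apply hpq; split; assumption|lra]).
    assert (Hw : w = 1) by (rewrite Hq in hwe; apply (Rmult_eq_reg_r (1 - p)); [lra|lra]).
    apply Euler_UVR; try assumption. fold l w. rewrite Hw.
    set (cc := c l sigma) in *.
    set (v := l * e2 / (cc * (psi - 1))).
    assert (Hv : 0 <= v) by (unfold v; apply Rmult_le_pos; [nra| left; apply Rinv_0_lt_compat; nra]).
    set (u := mf l sigma mu psi (l * e1 + (1 + cc) * v)).
    pose proof (gc_mf l sigma mu psi w) as Hg. feed Hg. specialize (Hg (l * e1 + (1 + cc) * v)).
    fold u in Hg. unfold gc in Hg. fold cc in Hg.
    exists u, v. unfold jf. split.
    - unfold cc in *. lra.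
    - unfold cc in *. rewrite Rmax_left by nra. unfold v. field. split; [lra|]. intro; nra. }
  assert (RPEq : q <> 1 -> forall e1, Euler_RPE_exists beta xi sigma mu psi p q e1 e2 <->
                   Rmin (t1 l sigma mu psi w e2) (t2 l sigma mu psi w e2) <= e1).
  { intros Hq e1. assert (hw : w < 1) by nra.
    rewrite Euler_UVR by assumption. fold l w. rewrite Rmin_le_iff.
    pose proof (Gthr l sigma mu psi w e2) as HG. feed HG. specialize (HG e1). rewrite <- HG.
    split.
    - intro HU. pose proof (UVR_G l sigma mu psi w) as H. feed H. destruct (H _ _ HU) as [b Hb].
      exists b. lra.
    - intro Hb. pose proof (G_root l sigma mu psi w) as H. feed H. destruct (H _ _ Hb) as [b Hb'].
      pose proof (G_UVR l sigma mu psi w) as H'. feed H'. exact (H' _ _ _ Hb'). }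
  set (ebar := match Req_EM_T q 1 with left _ => m_infty | right _ => Finite (Rmin (t1 l sigma mu psi w e2) (t2 l sigma mu psi w e2)) end).
  assert (RPEchar : forall e1, Euler_RPE_exists beta xi sigma mu psi p q e1 e2 <-> Rbar_le ebar e1).
  { intro e1. unfold ebar. destruct (Req_EM_T q 1) as [Hq|Hq].
    - simpl. split; [auto| intros _; apply RPEq1; assumption].
    - simpl. apply RPEq. assumption. }
  set (A := Acoef beta p q l sigma).
  assert (hA : l * sigma < A).
  { unfold A, Acoef. destruct (Rle_dec 0 (p + q - 1)).
    - assert (beta * (p + q - 1) < 1) by nra. lra.
    - assert (beta * (p + q - 1) <= 0) by nra. lra. }
  set (r := (2 - p - q) * A / (1 + c l sigma)).
  assert (Hr : r * (1 + c l sigma) = (2 - p - q) * A) by (unfold r; field; lra).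
  assert (E1 : r * w * (1 + c l sigma) = (1 - p) * A).
  { rewrite <- hwe. replace (r * w * (1 + c l sigma)) with (w * (r * (1 + c l sigma))) by ring. rewrite Hr. ring. }
  assert (E2 : r * (1 - w) * (1 + c l sigma) = (1 - q) * A).
  { replace (r * (1 - w) * (1 + c l sigma)) with ((1 - w) * (r * (1 + c l sigma))) by ring. rewrite Hr.
    replace (1 - q) with ((2 - p - q) - w * (2 - p - q)) by lra. ring. }
  exists ebar. split; [|split; [|split; [|split]]].
  - unfold ebar. destruct (Req_EM_T q 1); discriminate.
  - intro e1. rewrite IH_Euler by assumption. apply RPEchar.
  - exact RPEchar.
  - intro Hq. unfold ebar. destruct (Req_EM_T q 1); [reflexivity|contradiction].
  - intros eR HeR HR. split.
    + intro Hle. destruct (Rle_dec 1 (p + q)) as [|N]; [assumption|exfalso].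
      assert (Hq : q <> 1) by lra.
      assert (hw : 0 < w < 1) by (split; nra).
      assert (hr : 1 < r).
      { assert ((1 + c l sigma) < (2 - p - q) * A).
        { unfold c in *. assert (1 + l * sigma < A).
          { unfold A, Acoef. assert (beta * (p + q - 1) < 0) by nra. lra. }
          nra. }
        nra. }
      pose proof (witness l sigma mu psi w e2) as HW. feed HW. destruct (HW r hr hw) as [e1 [[u [v [U1 U2]]] Hlt]].
      rewrite E1 in U1. rewrite E2 in U2.
      assert (HE : Euler_REE_exists beta xi sigma mu psi p q e1 e2) by (eapply UV_REE; eassumption).
      apply HR in HE.
      pose proof (Rbar_le_trans _ _ _ Hle HE) as H3.
      unfold ebar in H3. destruct (Req_EM_T q 1); [contradiction|]. simpl in H3. lra.
    + intro H1pq.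
      assert (Himp : forall e1, Euler_REE_exists beta xi sigma mu psi p q e1 e2 -> Euler_RPE_exists beta xi sigma mu psi p q e1 e2).
      { intros e1 HE. destruct (REE_UV beta xi sigma mu psi p q e1 e2 hbeta hxi HE) as [u [v [U1 U2]]].
        apply Euler_UVR; try assumption. fold l w.
        pose proof (UVr_UVR l sigma mu psi w) as HU. feed HU. apply (HU r).
        - split.
          + apply Rmult_lt_reg_r with (1 + c l sigma); [lra|]. rewrite Hr. assert (0 < A) by (unfold c in hc; lra). nra.
          + apply Rmult_le_reg_r with (1 + c l sigma); [lra|]. rewrite Hr.
            unfold A, Acoef in *. unfold c. assert (0 <= beta * (p + q - 1)) by nra. unfold c in hc. assert ((2 - p - q) * (1 - beta * (p + q - 1) + l * sigma) <= 1 * (1 - beta * (p + q - 1) + l * sigma)) by (apply Rmult_le_compat_r; lra). lra.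
        - exists u, v. fold l in U1, U2. fold A in U1, U2. rewrite E1, E2. split; assumption. }
      destruct eR as [a| |].
      * apply RPEchar. apply Himp. apply HR. simpl. lra.
      * contradiction.
      * assert (Hall : forall e1 : R, Rbar_le ebar e1) by (intro e1; apply RPEchar; apply Himp; apply HR; simpl; trivial).
        destruct ebar as [t| |] eqn:Eb.
        -- specialize (Hall (t - 1)). simpl in Hall. lra.
        -- exfalso. unfold ebar in Eb. destruct (Req_EM_T q 1); discriminate.
        -- simpl. trivial.
Qed.
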